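(* Let $G$ be a countable locally finite group (every finite subset of $G$ is contained in a finite subgroup). Then the ballean $\mathcal{B}(G)$ is decomposable in a direct product of finite sets, i.e. it is asymorphic to $\mathcal{B}(Z)$ for some direct product $Z=\otimes_{\lambda<\delta}(Z_\lambda,e_\lambda)$ of a pointed family of finite sets $Z_\lambda$.
   Context: For an infinite group $G$ with identity $e$, $\mathcal{B}(G)=(G,\mathcal{F},B)$ where $\mathcal{F}=\{A\subseteq G: e\in A, |A|<|G|\}$ and $B(g,A)=gA$. For balleans $(X_1,P_1,B_1)$, $(X_2,P_2,B_2)$ (sets with families of balls $B(x,\alpha)\subseteq X$ indexed by $x\in X,\alpha\in P$), a map $f:X_1\to X_2$ is a $\prec$-mapping if for every $\alpha\in P_1$ there is $\beta\in P_2$ with $f(B_1(x,\alpha))\subseteq B_2(f(x),\beta)$ for all $x$; a bijection $f$ is an asymorphism if $f$ and $f^{-1}$ are $\prec$-mappings. Given an ordinal $\delta$ and non-empty sets $Z_\lambda$ ($\lambda<\delta$) with chosen points $e_\lambda\in Z_\lambda$, the direct product $Z=\otimes_{\lambda<\delta}(Z_\lambda,e_\lambda)$ is the set of functions $f$ on $\{\lambda:\lambda<\delta\}$ with $f(\lambda)\in Z_\lambda$ and $f(\lambda)=e_\lambda$ for all but finitely many $\lambda$; its ballean is $\mathcal{B}(Z)=(Z,\{\lambda:\lambda<\delta\},B)$ with $B(f,\lambda)=\{g\in Z: g(\lambda')=f(\lambda')\text{ for all }\lambda\le\lambda'<\delta\}$. *)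

(* Defs.v *)
From Stdlib Require Import List.

Set Implicit Arguments.

Record group := Group {
  carrier :> Type;
  gmul : carrier -> carrier -> carrier;
  gone : carrier;
  ginv : carrier -> carrier;
  gmulA : forall x y z, gmul x (gmul y z) = gmul (gmul x y) z;
  gmul1l : forall x, gmul gone x = x;
  gmulVl : forall x, gmul (ginv x) x = gone
}.

Definition countable (T : Type) : Prop :=
  exists f : T -> nat, forall x y, f x = f y -> x = y.

Definition infinite_type (T : Type) : Prop :=
  ~ exists l : list T, forall x, In x l.

Definition finite_type (T : Type) : Prop :=
  exists l : list T, forall x, In x l.

Definition finite_set (T : Type) (A : T -> Prop) : Prop :=
  exists l : list T, forall x, A x -> In x l.

Definition is_subgroup {G : group} (H : G -> Prop) : Prop :=
  H (gone G) /\ (forall x y, H x -> H y -> H (gmul G x y))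
  /\ (forall x, H x -> H (ginv G x)).

Definition locally_finite (G : group) : Prop :=
  forall l : list G, exists H : G -> Prop,
    is_subgroup (G:=G) H /\ finite_set H /\ (forall x, In x l -> H x).

(* |A| < |T| for A a subset of T: (A injects into T trivially and)
   there is no injection of T into A *)
Definition card_lt (T : Type) (A : T -> Prop) : Prop :=
  ~ exists f : T -> {x : T | A x},
      forall x y, f x = f y -> x = y.

Record ballean := Ballean {
  bpts : Type;
  bradii : Type;
  ball : bpts -> bradii -> bpts -> Prop
}.

Definition prec_mapping (B1 B2 : ballean) (f : bpts B1 -> bpts B2) : Prop :=
  forall alpha : bradii B1, exists beta : bradii B2,
    forall x y, ball B1 x alpha y -> ball B2 (f x) beta (f y).

Definition asymorphism (B1 B2 : ballean) (f : bpts B1 -> bpts B2) : Prop :=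
  exists g : bpts B2 -> bpts B1,
    (forall x, g (f x) = x) /\ (forall y, f (g y) = y) /\
    prec_mapping B1 B2 f /\ prec_mapping B2 B1 g.

Definition asymorphic (B1 B2 : ballean) : Prop :=
  exists f, asymorphism B1 B2 f.

Definition group_radius (G : group) : Type :=
  {A : G -> Prop | A (gone G) /\ card_lt A}.

Definition group_ballean (G : group) : ballean :=
  @Ballean G (group_radius G)
    (fun g A y => exists a, proj1_sig A a /\ y = gmul G g a).

(* An ordinal delta is represented (up to order isomorphism) by its set of
   elements {lambda : lambda < delta}: a type I with a strict well-order. *)
Definition well_order (I : Type) (lt : I -> I -> Prop) : Prop :=
  (forall i, ~ lt i i) /\
  (forall i j k, lt i j -> lt j k -> lt i k) /\
  (forall i j, lt i j \/ i = j \/ lt j i) /\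
  well_founded lt.

Definition finsupp (I : Type) (Z : I -> Type) (e : forall i, Z i)
  (f : forall i, Z i) : Prop :=
  exists l : list I, forall i, f i <> e i -> In i l.

Definition dprod (I : Type) (Z : I -> Type) (e : forall i, Z i) : Type :=
  {f : forall i, Z i | @finsupp I Z e f}.

Definition dprod_ballean (I : Type) (lt : I -> I -> Prop)
  (Z : I -> Type) (e : forall i, Z i) : ballean :=
  @Ballean (@dprod I Z e) I
    (fun f lam g => forall lam', (lt lam lam' \/ lam = lam') ->
       proj1_sig g lam' = proj1_sig f lam').

(* Main.v *)
Require Import Defs.
From Stdlib Require Import List Arith Lia Classical ClassicalEpsilon FunctionalExtensionality ProofIrrelevance PropExtensionality.

Local Notation "x ** y" := (gmul _ x y) (at level 40, left associativity).
Local Notation inv := (ginv _).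

Lemma mulKl (G : group) (x y : G) : inv x ** (x ** y) = y.
Proof. rewrite gmulA, gmulVl, gmul1l. reflexivity. Qed.

Lemma mulV (G : group) (x : G) : x ** inv x = gone G.
Proof.
  assert (h : (x ** inv x) ** (x ** inv x) = x ** inv x).
  { rewrite <- gmulA, mulKl. reflexivity. }
  rewrite <- (gmulVl G (x ** inv x)). symmetry.
  transitivity (inv (x ** inv x) ** ((x ** inv x) ** (x ** inv x))).
  - rewrite h. reflexivity.
  - apply mulKl.
Qed.

Lemma mul1r (G : group) (x : G) : x ** gone G = x.
Proof. rewrite <- (gmulVl G x), gmulA, mulV, gmul1l. reflexivity. Qed.

Lemma mulKr (G : group) (x y : G) : x ** (inv x ** y) = y.
Proof. rewrite gmulA, mulV, gmul1l. reflexivity. Qed.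

Lemma inv_uniq (G : group) (a b : G) : a ** b = gone G -> inv a = b.
Proof. intro h. rewrite <- (mulKl G a b), h, mul1r. reflexivity. Qed.

Lemma invK (G : group) (x : G) : inv (inv x) = x.
Proof. apply inv_uniq, gmulVl. Qed.

Lemma inv_mul (G : group) (x y : G) : inv (x ** y) = inv y ** inv x.
Proof. apply inv_uniq. rewrite <- gmulA, (gmulA G y), mulV, gmul1l, mulV. reflexivity. Qed.

Lemma inv_one (G : group) : inv (gone G) = gone G.
Proof. apply inv_uniq, gmul1l. Qed.

Lemma eq_cancel (G : group) (x a b : G) : inv (x ** a) ** (x ** b) = inv a ** b.
Proof. rewrite inv_mul, <- gmulA, mulKl. reflexivity. Qed.

Lemma sub_one (G : group) (K : G -> Prop) : is_subgroup K -> K (gone G).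
Proof. intros [h _]; exact h. Qed.
Lemma sub_mul (G : group) (K : G -> Prop) x y : is_subgroup K -> K x -> K y -> K (x ** y).
Proof. intros [_ [h _]]; auto. Qed.
Lemma sub_inv (G : group) (K : G -> Prop) x : is_subgroup K -> K x -> K (inv x).
Proof. intros [_ [_ h]]; auto. Qed.

Lemma sub_sym (G : group) (K : G -> Prop) x y : is_subgroup K -> K (inv x ** y) -> K (inv y ** x).
Proof. intros hK h. apply (sub_inv _ _ _ hK) in h. rewrite inv_mul, invK in h. exact h. Qed.

Lemma sub_trans (G : group) (K : G -> Prop) x y z : is_subgroup K -> K (inv x ** y) -> K (inv y ** z) -> K (inv x ** z).
Proof. intros hK h1 h2. pose proof (sub_mul _ _ _ _ hK h1 h2) as h.
  rewrite <- gmulA, mulKr in h. exact h. Qed.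

Lemma sub_cancel (G : group) (K : G -> Prop) x y a b : is_subgroup K -> K a -> K b ->
  K (inv (x ** a) ** (y ** b)) -> K (inv x ** y).
Proof.
  intros hK ha hb h.
  assert (e : inv x ** y = a ** ((inv (x ** a) ** (y ** b)) ** inv b)).
  { rewrite inv_mul. rewrite <- !gmulA. rewrite mulKr, mulV, mul1r. reflexivity. }
  rewrite e. apply sub_mul; auto. apply sub_mul; auto. apply sub_inv; auto.
Qed.

Lemma sub_elt (G : group) (K : G -> Prop) x y : is_subgroup K -> K x -> K (inv x ** y) -> K y.
Proof. intros hK hx h. rewrite <- (mulKr G x y). apply sub_mul; auto. Qed.

Record chain (G : group) (H : nat -> G -> Prop) : Prop := {
  ch_sub : forall n, is_subgroup (H n);
  ch_mono : forall n x, H n x -> H (S n) x;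
  ch_zero : forall x, H 0 x -> x = gone G;
  ch_fin : forall n, finite_set (H n);
  ch_ex : forall x, exists n, H n x }.

Lemma ch_le (G : group) H (hc : chain G H) m n x : m <= n -> H m x -> H n x.
Proof. induction 1; auto. intro; apply hc.(ch_mono _ _); auto. Qed.

Definition pick {G : group} (c : G -> nat) (k : nat) : option G :=
  match excluded_middle_informative (exists g, c g = k) with
  | left h => Some (proj1_sig (constructive_indefinite_description _ h))
  | right _ => None end.

Lemma pick_spec {G : group} (c : G -> nat) (hc : forall x y, c x = c y -> x = y) g :
  pick c (c g) = Some g.
Proof.
  unfold pick. destruct excluded_middle_informative as [h|h].
  - destruct constructive_indefinite_description as [g' e]. simpl. f_equal; auto.
  - exfalso; eauto.
Qed.

Definition o2l {A} (o : option A) : list A := match o with Some a => a :: nil | None => nil end.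

Definition subg (G : group) (lf : locally_finite G) (l : list G) : G -> Prop :=
  proj1_sig (constructive_indefinite_description _ (lf l)).

Lemma subg_spec (G : group) lf l : is_subgroup (subg G lf l) /\ finite_set (subg G lf l) /\
  forall x, In x l -> subg G lf l x.
Proof. unfold subg. destruct constructive_indefinite_description as [K hK]. exact hK. Qed.

Definition subl (G : group) lf l : list G :=
  proj1_sig (constructive_indefinite_description _ (proj1 (proj2 (subg_spec G lf l)))).

Lemma subl_spec (G : group) lf l x : subg G lf l x -> In x (subl G lf l).
Proof. unfold subl. destruct constructive_indefinite_description as [L hL]. simpl. auto. Qed.

Fixpoint Ls (G : group) lf (c : G -> nat) (n : nat) : list G :=
  match n with 0 => gone G :: nil | S m => subl G lf (Ls G lf c m ++ o2l (pick c m)) end.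

Definition Hc (G : group) lf (c : G -> nat) (n : nat) : G -> Prop :=
  match n with 0 => fun x => x = gone G | S m => subg G lf (Ls G lf c m ++ o2l (pick c m)) end.

Lemma Hc_Ls (G : group) lf c n x : Hc G lf c n x -> In x (Ls G lf c n).
Proof. destruct n; simpl. - intros ->; auto. - apply subl_spec. Qed.

Lemma exists_chain (G : group) : countable G -> locally_finite G -> exists H, chain G H.
Proof.
  intros [c hc] lf. exists (Hc G lf c). constructor.
  - intros [|n]; simpl.
    + split; [reflexivity|split].
      * intros x y -> ->. apply gmul1l.
      * intros x ->. apply inv_one.
    + apply subg_spec.
  - intros n x h. simpl. apply subg_spec. apply in_or_app. left. apply Hc_Ls; auto.
  - intros x h; exact h.
  - intros n. exists (Ls G lf c n). apply Hc_Ls.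
  - intros x. exists (S (c x)). simpl. apply subg_spec. apply in_or_app. right.
    rewrite pick_spec; simpl; auto.
Qed.

Definition rep (G : group) (H : nat -> G -> Prop) (n : nat) (x : G) : G :=
  match excluded_middle_informative (H n x) with
  | left _ => gone G
  | right _ => epsilon (inhabits (gone G)) (fun y => H n (inv x ** y)) end.

Lemma rep_in (G : group) H (hc : chain G H) n x : H n (inv x ** rep G H n x).
Proof.
  unfold rep. destruct excluded_middle_informative as [h|h].
  - rewrite mul1r. apply sub_inv; auto. apply hc.
  - apply (epsilon_spec (inhabits (gone G)) (fun y => H n (inv x ** y))).
    exists x. rewrite gmulVl. apply sub_one, hc.
Qed.

Lemma rep_eq (G : group) H (hc : chain G H) n x y : H n (inv x ** y) -> rep G H n x = rep G H n y.
Proof.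
  intros hxy. pose proof (ch_sub _ _ hc n) as hK.
  unfold rep. destruct (excluded_middle_informative (H n x)) as [h|h];
  destruct (excluded_middle_informative (H n y)) as [h'|h']; auto.
  - exfalso. apply h'. apply (sub_elt _ _ x); auto.
  - exfalso. apply h. apply (sub_elt _ _ y); auto. apply sub_sym; auto.
  - f_equal. apply functional_extensionality. intro z. apply propositional_extensionality.
    split; intro hz.
    + apply (sub_trans _ _ _ x); auto. apply sub_sym; auto.
    + apply (sub_trans _ _ _ y); auto.
Qed.

Lemma rep_idem (G : group) H (hc : chain G H) n x : rep G H n (rep G H n x) = rep G H n x.
Proof. symmetry. apply rep_eq; auto. apply rep_in; auto. Qed.

Lemma rep_one (G : group) H (hc : chain G H) n : rep G H n (gone G) = gone G.
Proof. unfold rep. destruct excluded_middle_informative as [h|h]; auto.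
  exfalso; apply h, sub_one, hc. Qed.

Lemma rep_H (G : group) H (hc : chain G H) n x : H (S n) x -> H (S n) (rep G H n x).
Proof.
  intro hx. apply (sub_elt _ _ x); auto. apply hc. apply hc.(ch_mono _ _). apply rep_in; auto.
Qed.

Definition Zt (G : group) (H : nat -> G -> Prop) (n : nat) : Type :=
  {z : G | H (S n) z /\ rep G H n z = z}.

Lemma Zt_eq (G : group) H n (z z' : Zt G H n) : proj1_sig z = proj1_sig z' -> z = z'.
Proof. destruct z as [z p], z' as [z' p']; simpl. intros ->. f_equal. apply proof_irrelevance. Qed.

Lemma Zt_fin (G : group) H (hc : chain G H) n : finite_type (Zt G H n).
Proof.
  destruct (ch_fin _ _ hc (S n)) as [L hL].
  exists (flat_map (fun x => match excluded_middle_informative (H (S n) x /\ rep G H n x = x) with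
                     | left p => (exist _ x p : Zt G H n) :: nil | right _ => nil end) L).
  intros [x p]. apply in_flat_map. exists x. split. { apply hL, p. }
  destruct excluded_middle_informative as [p'|p']. - left. apply Zt_eq. reflexivity.
  - contradiction.
Qed.

Fixpoint top (G : group) H (f : forall n, Zt G H n) (n k : nat) : G :=
  match k with 0 => gone G | S k => proj1_sig (f (n + k)) ** top G H f n k end.

Lemma top_split (G : group) H f n k : top G H f 0 (n + k) = top G H f n k ** top G H f 0 n.
Proof.
  induction k; simpl.
  - rewrite Nat.add_0_r, gmul1l. reflexivity.
  - rewrite Nat.add_succ_r. simpl. rewrite IHk, gmulA. reflexivity.
Qed.

Lemma top_in (G : group) H (hc : chain G H) f n k : H (n + k) (top G H f n k).
Proof.
  induction k; simpl.
  - apply sub_one, hc.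
  - rewrite Nat.add_succ_r. apply sub_mul. apply hc.
    + exact (proj1 (proj2_sig (f (n + k)))).
    + apply hc.(ch_mono _ _); auto.
Qed.

Lemma top_agree (G : group) H f f' n k : (forall m, n <= m < n + k -> f m = f' m) ->
  top G H f n k = top G H f' n k.
Proof.
  induction k; simpl; intro h; auto.
  rewrite h by lia. rewrite IHk; auto. intros; apply h; lia.
Qed.

Lemma top_sep (G : group) H (hc : chain G H) f f' n k :
  H n (inv (top G H f n k) ** top G H f' n k) -> forall m, n <= m < n + k -> f m = f' m.
Proof.
  induction k; simpl; intros h m hm. { lia. }
  assert (hk : H (n + k) (inv (top G H f n k) ** top G H f' n k) /\ f (n + k) = f' (n + k)).
  { assert (ha : H (n + k) (inv (proj1_sig (f (n+k))) ** proj1_sig (f' (n+k)))).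
    { apply (sub_cancel G (H (n + k)) _ _ (top G H f n k) (top G H f' n k)).
      - apply hc. - apply top_in; auto. - apply top_in; auto.
      - apply (ch_le _ _ hc n); [lia|exact h]. }
    apply (rep_eq _ _ hc) in ha.
    assert (e : f (n + k) = f' (n + k)).
    { apply Zt_eq. pose proof (proj2 (proj2_sig (f (n+k)))) as pa.
      pose proof (proj2 (proj2_sig (f' (n+k)))) as pa'.
      transitivity (rep G H (n+k) (proj1_sig (f (n+k)))); [symmetry; exact pa|].
      rewrite ha; exact pa'. }
    split; auto. rewrite e in h. rewrite eq_cancel in h.
    apply (ch_le _ _ hc n); auto; lia. }
  destruct hk as [hk e].
  destruct (Nat.eq_dec m (n + k)) as [->|ne]; auto.
  apply IHk; [|lia]. rewrite e in h. rewrite eq_cancel in h. exact h.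
Qed.

Lemma supp_bound (Z : nat -> Type) (e f : forall n, Z n) : @finsupp nat Z e f ->
  exists N, forall m, N <= m -> f m = e m.
Proof.
  intros [l hl]. exists (S (list_max l)). intros m hm.
  destruct (classic (f m = e m)) as [h|h]; auto.
  apply hl in h. exfalso.
  assert (hx : list_max l <= list_max l) by lia. apply list_max_le in hx.
  rewrite Forall_forall in hx. apply hx in h. lia.
Qed.

Lemma top_e (G : group) H (e : forall n, Zt G H n) (he : forall n, proj1_sig (e n) = gone G) n k :
  top G H e n k = gone G.
Proof. induction k; simpl; auto. rewrite IHk, he, gmul1l. reflexivity. Qed.

Lemma top_stable (G : group) H (e : forall n, Zt G H n) (he : forall n, proj1_sig (e n) = gone G)
  f N M : (forall m, N <= m -> f m = e m) -> N <= M -> top G H f 0 M = top G H f 0 N.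
Proof.
  intros hf hNM. replace M with (N + (M - N)) by lia. rewrite top_split.
  rewrite (top_agree G H f e). - rewrite top_e, gmul1l; auto.
  - intros; apply hf; lia.
Qed.

Definition phi (G : group) H (e : forall n, Zt G H n) (F : @dprod nat (Zt G H) e) : G :=
  epsilon (inhabits (gone G)) (fun g => exists N, (forall m, N <= m -> proj1_sig F m = e m)
     /\ g = top G H (proj1_sig F) 0 N).

Lemma phi_spec (G : group) H (e : forall n, Zt G H n) (he : forall n, proj1_sig (e n) = gone G)
  F N : (forall m, N <= m -> proj1_sig F m = e m) -> phi G H e F = top G H (proj1_sig F) 0 N.
Proof.
  intro hN. unfold phi.
  destruct (epsilon_spec (inhabits (gone G)) (fun g => exists N, (forall m, N <= m -> proj1_sig F m = e m)
     /\ g = top G H (proj1_sig F) 0 N)) as [N' [hN' ->]].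
  { destruct (supp_bound _ _ _ (proj2_sig F)) as [N0 h0]. eauto. }
  rewrite <- (top_stable G H e he _ N' (N + N')); auto; [|lia].
  rewrite <- (top_stable G H e he _ N (N + N')); auto; lia.
Qed.

Lemma ball_corr (G : group) H (hc : chain G H) (e : forall n, Zt G H n)
  (he : forall n, proj1_sig (e n) = gone G) F F' n :
  (forall m, n <= m -> proj1_sig F' m = proj1_sig F m) <-> H n (inv (phi G H e F) ** phi G H e F').
Proof.
  destruct (supp_bound _ _ _ (proj2_sig F)) as [N1 h1].
  destruct (supp_bound _ _ _ (proj2_sig F')) as [N2 h2].
  rewrite (phi_spec G H e he F (n + (N1 + N2))) by (intros; apply h1; lia).
  rewrite (phi_spec G H e he F' (n + (N1 + N2))) by (intros; apply h2; lia).
  rewrite !top_split. split.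
  - intro hag. rewrite (top_agree G H (proj1_sig F') (proj1_sig F)) by (intros; apply hag; lia).
    rewrite eq_cancel. apply (sub_mul _ _ _ _ (ch_sub _ _ hc n)).
    + apply sub_inv; [apply hc|]. apply (top_in G H hc _ 0 n).
    + apply (top_in G H hc _ 0 n).
  - intros h m hm.
    assert (h' : H n (inv (top G H (proj1_sig F) n (N1 + N2)) ** top G H (proj1_sig F') n (N1 + N2))).
    { apply (sub_cancel _ _ _ _ _ _ (ch_sub _ _ hc n) (top_in G H hc _ 0 n) (top_in G H hc _ 0 n) h). }
    destruct (Nat.lt_ge_cases m (n + (N1 + N2))) as [lt|ge].
    + symmetry. apply (top_sep G H hc _ _ n (N1 + N2)); auto.
    + rewrite h1, h2 by lia. reflexivity.
Qed.

Definition mkZ (G : group) H (e : forall n, Zt G H n) m (x : G) : Zt G H m :=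
  match excluded_middle_informative (H (S m) x /\ rep G H m x = x) with
  | left p => exist _ x p | right _ => e m end.

Lemma surj (G : group) H (hc : chain G H) (e : forall n, Zt G H n)
  (he : forall n, proj1_sig (e n) = gone G) N : forall g, H N g ->
  exists f : forall n, Zt G H n, (forall m, N <= m -> f m = e m) /\ top G H f 0 N = g.
Proof.
  induction N; intros g hg.
  - exists e. split; auto. simpl. symmetry; apply hc; auto.
  - set (z := rep G H N g).
    assert (hz : H (S N) z /\ rep G H N z = z). { split. apply rep_H; auto. apply rep_idem; auto. }
    assert (hh : H N (inv z ** g)). { apply sub_sym; [apply hc|]. apply rep_in; auto. }
    destruct (IHN _ hh) as [f' [hf' ht]].
    exists (fun m => if Nat.eq_dec m N then mkZ G H e m z else f' m). split.
    + intros m hm. destruct (Nat.eq_dec m N); [lia|]. apply hf'; lia.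
    + simpl. destruct (Nat.eq_dec N N) as [_|ne]; [|congruence].
      unfold mkZ at 1. destruct excluded_middle_informative as [p|p]; [|contradiction]. simpl.
      rewrite (top_agree G H _ f'). { rewrite ht. apply mulKr. }
      intros m hm. destruct (Nat.eq_dec m N); [lia|reflexivity].
Qed.



Lemma sig_eq {A} (P : A -> Prop) (x y : {a | P a}) : proj1_sig x = proj1_sig y -> x = y.
Proof. destruct x, y; simpl; intros ->. f_equal. apply proof_irrelevance. Qed.

Lemma card_fin (G : group) (K : G -> Prop) : infinite_type G -> finite_set K -> card_lt K.
Proof.
  intros inf [L hL] [j hj]. apply inf.
  set (pre := fun y : G => epsilon (inhabits (gone G)) (fun g => proj1_sig (j g) = y)).
  exists (map pre L). intro g.
  assert (hp : pre (proj1_sig (j g)) = g).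
  { unfold pre. apply hj. apply sig_eq.
    apply (epsilon_spec (inhabits (gone G)) (fun g0 => proj1_sig (j g0) = proj1_sig (j g))). eauto. }
  rewrite <- hp. apply in_map. apply hL. exact (proj2_sig (j g)).
Qed.

Fixpoint tseq (b : nat -> nat) (k : nat) : nat :=
  match k with 0 => 0 | S k => b (tseq b k) end.

Lemma card_bound (G : group) H (hc : chain G H) (A : G -> Prop) :
  countable G -> card_lt A -> exists n, forall x, A x -> H n x.
Proof.
  intros [c hcinj] hA. apply NNPP. intro hn.
  assert (hb : forall n, exists x, A x /\ ~ H n x).
  { intro n. apply NNPP. intro h. apply hn. exists n. intros x hx.
    apply NNPP. intro hx'. apply h. eauto. }
  set (b := fun n => epsilon (inhabits (gone G)) (fun x => A x /\ ~ H n x)).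
  assert (hbs : forall n, A (b n) /\ ~ H n (b n)).
  { intro n. apply (epsilon_spec (inhabits (gone G)) (fun x => A x /\ ~ H n x)). apply hb. }
  set (lev := fun x => epsilon (inhabits 0) (fun n => H n x)).
  assert (hlev : forall x, H (lev x) x).
  { intro x. apply (epsilon_spec (inhabits 0) (fun n => H n x)). apply hc. }
  set (t := tseq (fun n => lev (b n))).
  assert (tS : forall k, t k < t (S k)).
  { intro k. simpl. destruct (Nat.lt_ge_cases (t k) (lev (b (t k)))) as [l|g]; auto.
    exfalso. apply (proj2 (hbs (t k))). apply (ch_le _ _ hc (lev (b (t k)))); auto. }
  assert (tmono : forall j k, j < k -> t (S j) <= t k).
  { intros j k; induction k; intro hjk; [lia|].
    destruct (Nat.eq_dec j k) as [->|ne]; auto. specialize (IHk ltac:(lia)). specialize (tS k). lia. }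
  assert (tinj : forall j k, j < k -> b (t j) <> b (t k)).
  { intros j k hjk heq. apply (proj2 (hbs (t k))). rewrite <- heq.
    apply (ch_le _ _ hc (t (S j))); auto. apply hlev. }
  apply hA. exists (fun g => exist _ (b (t (c g))) (proj1 (hbs (t (c g))))).
  intros x y hxy. apply (f_equal (@proj1_sig _ _)) in hxy. simpl in hxy.
  apply hcinj. destruct (Nat.lt_total (c x) (c y)) as [l|[eq|l]]; auto.
  - exfalso; eapply tinj; eauto.
  - exfalso; eapply tinj; eauto.
Qed.

Theorem corollary1 (G : group) :
  infinite_type G -> countable G -> locally_finite G ->
  exists (I : Type) (lt : I -> I -> Prop) (Z : I -> Type) (e : forall i, Z i),
    well_order lt /\ (forall i, finite_type (Z i)) /\
    asymorphic (group_ballean G) (@dprod_ballean I lt Z e).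
Proof.
  intros inf cnt lf. destruct (exists_chain G cnt lf) as [H hc].
  set (e := fun n => exist (fun z => H (S n) z /\ rep G H n z = z) (gone G)
                       (conj (sub_one _ _ (ch_sub _ _ hc (S n))) (rep_one G H hc n)) : Zt G H n).
  assert (he : forall n, proj1_sig (e n) = gone G) by reflexivity.
  exists nat, lt, (Zt G H), e. split; [|split].
  - split; [|split; [|split]].
    + intros i; lia. + intros i j k; lia. + intros i j; lia. + apply lt_wf.
  - apply Zt_fin; auto.
  - set (inhD := inhabits (exist _ e (ex_intro _ nil (fun i h => False_ind _ (h eq_refl)))
                   : @dprod nat (Zt G H) e)).
    set (psi := fun g => epsilon inhD (fun F => phi G H e F = g)).
    assert (hpsi : forall g, phi G H e (psi g) = g).
    { intro g. apply (epsilon_spec inhD (fun F => phi G H e F = g)).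
      destruct (ch_ex _ _ hc g) as [N hN].
      destruct (surj G H hc e he N g hN) as [f [hf hfg]].
      assert (fs : @finsupp nat (Zt G H) e f).
      { exists (seq 0 N). intros i hi. apply in_seq.
        destruct (Nat.lt_ge_cases i N); [lia|]. exfalso; apply hi, hf; auto. }
      exists (exist _ f fs). rewrite (phi_spec G H e he _ N); auto. }
    assert (hinj : forall F F', phi G H e F = phi G H e F' -> F = F').
    { intros F F' hF. apply sig_eq. apply functional_extensionality_dep. intro m.
      symmetry. apply (proj2 (ball_corr G H hc e he F F' 0)); [|lia].
      rewrite hF, gmulVl. apply sub_one, hc. }
    exists psi, (phi G H e). split; [|split; [|split]].
    + exact hpsi.
    + intro F. apply hinj. apply hpsi.
    + intros [A [hA1 hA2]]. destruct (card_bound G H hc A cnt hA2) as [n hn].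
      exists n. intros x y [a [ha ->]]. simpl. intros l hl.
      apply (proj2 (ball_corr G H hc e he (psi x) (psi (x ** a)) n)); [|lia].
      rewrite !hpsi, mulKl. auto.
    + intro n. exists (exist _ (H n) (conj (sub_one _ _ (ch_sub _ _ hc n))
                        (card_fin G (H n) inf (ch_fin _ _ hc n)))).
      intros F F' hb. simpl. exists (inv (phi G H e F) ** phi G H e F'). split.
      * apply (ball_corr G H hc e he F F' n). intros m hm. apply hb. lia.
      * symmetry; apply mulKr.
Qed.
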